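(* There exist finite-dimensional Hilbert spaces $\mathcal{H}_A,\mathcal{H}_B,\mathcal{H}_C$, a reference basis of $\mathcal{H}_A$, and a state $\rho_{ABC}$ on $\mathcal{H}_A\otimes\mathcal{H}_B\otimes\mathcal{H}_C$ such that $$C^{A|BC}_r(\rho_{ABC})<C^{A|B}_r(\rho_{AB})+C^{A|C}_r(\rho_{AC}),$$ where $\rho_{AB},\rho_{AC}$ are the reduced states.
   Context: $S(\rho\|\sigma)=\mathrm{Tr}\,\rho(\log\rho-\log\sigma)$ is the relative entropy. A state on $\mathcal{H}_A$ is incoherent if it is diagonal in the fixed basis of $\mathcal{H}_A$. The set $\mathcal{IQ}$ of incoherent-quantum states on $\mathcal{H}_A\otimes\mathcal{H}_X$ consists of states $\sum_kp_k\sigma^A_k\otimes\tau^X_k$ with each $\sigma^A_k$ incoherent and $\tau^X_k$ arbitrary states; $C^{A|X}_r(\rho_{AX})=\min_{\sigma\in\mathcal{IQ}}S(\rho_{AX}\|\sigma)$ (here $X$ is $B$, $C$, or the composite $BC$). *)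

(* Defs.v *)
From HB Require Import structures.
From mathcomp Require Import all_boot all_order all_algebra.
From mathcomp Require Import complex mxtens.
From mathcomp Require Import reals constructive_ereal ereal exp.
From mathcomp Require Import classical_sets.

Set Implicit Arguments.
Unset Strict Implicit.
Unset Printing Implicit Defensive.

Import Order.TTheory GRing.Theory Num.Theory.
Local Open Scope ring_scope.
Local Open Scope sesquilinear_scope.

Section QuantumDefs.
Variable R : realType.
Local Notation C := (R[i]).

Definition density_mx n (rho : 'M[C]_n) : Prop :=
  rho = rho ^t* /\
  (forall u : 'rV[C]_n, 0 <= (u *m rho *m u ^t*) 0 0) /\
  \tr rho = 1.

(* functional calculus for normal (in particular Hermitian) matrices, via the
   spectral decomposition A = P^-1 diag(d) P of mathcomp's spectral.v;
   f is applied to the real parts of the (real) eigenvalues *)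
Definition mx_fun (f : R -> R) n (A : 'M[C]_n) : 'M[C]_n :=
  invmx (spectralmx A) *m
  diag_mx (\row_i ((f (complex.Re (spectral_diag A 0 i)))%:C)%C) *m spectralmx A.

(* matrix logarithm (natural log).  The value assigned to eigenvalue 0 is
   irrelevant wherever it is used below (see rel_entropy). *)
Definition logm n (A : 'M[C]_n) : 'M[C]_n := mx_fun (@ln R) A.

(* Umegaki relative entropy S(rho||sigma) = Tr rho (log rho - log sigma),
   with value +oo when supp rho is not contained in supp sigma
   (i.e. ker sigma not contained in ker rho). *)
Definition rel_entropy n (rho sigma : 'M[C]_n) : \bar R :=
  if (kermx sigma <= kermx rho)%MS
  then (complex.Re (\tr (rho *m (logm rho - logm sigma))))%:E
  else +oo%E.

(* incoherent state on C^dA: a diagonal density matrix (fixed basis = the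
   standard basis of C^dA) *)
Definition incoherent_state dA (s : 'M[C]_dA) : Prop :=
  density_mx s /\ is_diag_mx s.

(* incoherent-quantum states on H_A (x) H_X, H_X = C^dX; the tensor product
   C^dA (x) C^dX is C^(dA*dX) via mxtens (Kronecker product). *)
Definition IQ_state dA dX (sigma : 'M[C]_(dA * dX)) : Prop :=
  exists (K : nat) (p : 'I_K -> R) (s : 'I_K -> 'M[C]_dA) (t : 'I_K -> 'M[C]_dX),
    [/\ forall k, 0 <= p k,
        \sum_k p k = 1,
        forall k, incoherent_state (s k),
        forall k, density_mx (t k) &
        sigma = \sum_k ((p k)%:C)%C *: (s k *t t k)].

Definition coh_rel_ent dA dX (rho : 'M[C]_(dA * dX)) : \bar R :=
  ereal_inf [set rel_entropy rho sigma | sigma in [set s | IQ_state s]]%classic.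

Definition idx3 dA dB dC (a : 'I_dA) (b : 'I_dB) (c : 'I_dC) : 'I_(dA * (dB * dC)) :=
  mxtens_index (a, mxtens_index (b, c)).

Definition ptrace_C dA dB dC (rho : 'M[C]_(dA * (dB * dC))) : 'M[C]_(dA * dB) :=
  \matrix_(i, j) \sum_(c < dC)
     rho (idx3 (mxtens_unindex i).1 (mxtens_unindex i).2 c)
         (idx3 (mxtens_unindex j).1 (mxtens_unindex j).2 c).

Definition ptrace_B dA dB dC (rho : 'M[C]_(dA * (dB * dC))) : 'M[C]_(dA * dC) :=
  \matrix_(i, j) \sum_(b < dB)
     rho (idx3 (mxtens_unindex i).1 b (mxtens_unindex i).2)
         (idx3 (mxtens_unindex j).1 b (mxtens_unindex j).2).

End QuantumDefs.

(* Main.v *)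
Require Import Defs.
From HB Require Import structures.
From mathcomp Require Import all_boot all_order all_algebra.
From mathcomp Require Import complex mxtens.
From mathcomp Require Import reals constructive_ereal ereal exp.
From mathcomp Require Import classical_sets.
From mathcomp Require Import ring lra.
Set Implicit Arguments.
Unset Strict Implicit.
Unset Printing Implicit Defensive.
Import Order.TTheory GRing.Theory Num.Theory.
Local Open Scope ring_scope.
Local Open Scope sesquilinear_scope.

Section S.
Variable R : realType.
Local Notation C := (R[i]).

Lemma psd_uu n (u : 'rV[C]_n) : 0 <= (u *m u ^t*) 0 0.
Proof.
rewrite !mxE; apply: sumr_ge0 => j _; rewrite !mxE; exact: mul_conjC_ge0.
Qed.

Definition h2 : C := 2^-1.
Lemma h2_conj : h2^* = h2.
Proof. by rewrite /h2 fmorphV rmorph_nat. Qed.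

Lemma const_herm n : (const_mx h2 : 'M[C]_n) = (const_mx h2) ^t*.
Proof. by apply/matrixP => i j; rewrite !mxE h2_conj. Qed.

Lemma const_psd n (u : 'rV[C]_n) : 0 <= (u *m const_mx h2 *m u ^t*) 0 0.
Proof.
have -> : (u *m const_mx h2 *m u ^t*) 0 0 = h2 * ((\sum_j u 0 j) * (\sum_j u 0 j)^*).
  rewrite !mxE rmorph_sum.
  under eq_bigr do rewrite !mxE.
  under eq_bigr do under eq_bigr do rewrite mxE.
  rewrite big_distrr /= big_distrr /=; apply: eq_bigr => j _.
  by rewrite -big_distrl /= mulrCA mulrA.
apply: mulr_ge0; first by rewrite /h2 invr_ge0 ler0n.
exact: mul_conjC_ge0.
Qed.

Lemma rho2_density : density_mx (const_mx h2 : 'M[C]_2).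
Proof.
split; first exact: const_herm.
split; first exact: const_psd.
rewrite /mxtrace !big_ord_recr big_ord0 /= !mxE /h2 add0r.
by rewrite -[in RHS](@divff _ 2) ?pnatr_eq0 // mulr_natl mulr2n.
Qed.

Lemma mx_fun_lin n (A : 'M[C]_n) (f : R -> R) (al be : C) :
  A \is normalmx ->
  (forall i, ((f (complex.Re (spectral_diag A 0 i)))%:C)%C = al + be * spectral_diag A 0 i) ->
  mx_fun f A = al%:M + be *: A.
Proof.
move=> /orthomx_spectralP hA hf; rewrite /mx_fun.
have -> : diag_mx (\row_i ((f (complex.Re (spectral_diag A 0 i)))%:C)%C) =
  al%:M + be *: diag_mx (spectral_diag A).
  apply/matrixP => i j; rewrite !mxE hf.
  by case: (i == j); rewrite /= ?mulr1n ?mulr0n ?mulr0 ?addr0.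
rewrite mulmxDr mulmxDl -scalemxAr -scalemxAl -hA.
by rewrite mul_mx_scalar -scalemxAl mulVmx ?spectral_unit // scalemx1.
Qed.

Lemma eig2 n (A : 'M[C]_n) (a b : C) :
  A \is normalmx -> (A - a%:M) *m (A - b%:M) = 0 ->
  forall i, spectral_diag A 0 i = a \/ spectral_diag A 0 i = b.
Proof.
move=> /orthomx_spectralP hA h i.
set P := spectralmx A; set d := spectral_diag A.
have hD : diag_mx d = P *m A *m invmx P.
  by rewrite hA !mulmxA mulmxV ?spectral_unit // mul1mx -mulmxA mulmxV ?spectral_unit // mulmx1.
have : (diag_mx d - a%:M) *m (diag_mx d - b%:M) = 0.
  have hc : forall c : C, diag_mx d - c%:M = P *m (A - c%:M) *m invmx P.
    move=> c; rewrite hD mulmxBr mulmxBl mul_mx_scalar -scalemxAl mulmxV ?spectral_unit //.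
    by rewrite scalemx1.
  rewrite !hc -!mulmxA (mulmxA (invmx P)) mulVmx ?spectral_unit // mul1mx.
  by rewrite !mulmxA -(mulmxA P) h mulmx0 mul0mx.
move/matrixP => /(_ i i); rewrite !mxE (bigD1 i) //= big1 ?addr0.
  rewrite !mxE eqxx /= mulr1n => /eqP; rewrite mulf_eq0 !subr_eq0 => /orP[]/eqP; by [left|right].
by move=> j /negbTE ji; rewrite !mxE ji eq_sym ji /= mulr0n !subr0 mul0r.
Qed.

Definition rho2 : 'M[C]_2 := const_mx h2.

Lemma rho2_normal : rho2 \is normalmx.
Proof. by apply/normalmxP; rewrite /rho2 -const_herm. Qed.

Lemma rho2_sq : rho2 *m rho2 = rho2.
Proof.
apply/matrixP => i j; rewrite !mxE !big_ord_recr big_ord0 /= !mxE add0r.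
by rewrite /h2; field.
Qed.

Lemma logm_rho2 : logm rho2 = 0.
Proof.
rewrite /logm (@mx_fun_lin _ _ _ 0 0) ?rho2_normal //.
  by rewrite scale0r addr0 raddf0.
move=> i; have [] := @eig2 _ rho2 0 1 rho2_normal _ i.
- by rewrite raddf0 subr0 mulmxBr mulmx1 rho2_sq subrr.
- by move=> ->; rewrite /= ln0 // mul0r addr0.
- by move=> ->; rewrite /= ln1 mul0r addr0.
Qed.

Lemma h2E : h2 = ((2^-1 : R)%:C)%C.
Proof. by rewrite /h2 fmorphV rmorph_nat. Qed.

Definition sig0 : 'M[C]_2 := h2%:M.

Lemma sig0_normal : sig0 \is normalmx.
Proof.
apply/normalmxP; have -> : sig0 ^t* = sig0.
  apply/matrixP => i j; rewrite !mxE eq_sym; case: (i == j); rewrite ?mulr1n ?mulr0n ?rmorph0 //; exact: h2_conj.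
by [].
Qed.

Lemma logm_sig0 : logm sig0 = ((ln (2^-1 : R))%:C)%C%:M.
Proof.
rewrite /logm (@mx_fun_lin _ _ _ ((ln (2^-1 : R))%:C)%C 0) ?sig0_normal //.
  by rewrite scale0r addr0.
move=> i; have [] := @eig2 _ sig0 h2 h2 sig0_normal _ i.
- by rewrite subrr mul0mx.
- by move=> ->; rewrite h2E /= mul0r addr0.
- by move=> ->; rewrite h2E /= mul0r addr0.
Qed.

Lemma tr_rho2 : \tr rho2 = 1.
Proof. by case: rho2_density => _ []. Qed.

Lemma rel_rho2_sig0 : rel_entropy rho2 sig0 = (ln 2 : R)%:E.
Proof.
rewrite /rel_entropy.
have -> : (kermx sig0 <= kermx rho2)%MS.
  apply/sub_kermxP.
  have hk := mulmx_ker sig0.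
  have : kermx sig0 = 0.
    move: hk; rewrite /sig0 mul_mx_scalar => /eqP; rewrite scaler_eq0 /h2.
    by rewrite invr_eq0 pnatr_eq0 /= => /eqP.
  by move=> ->; rewrite mul0mx.
rewrite logm_rho2 logm_sig0 sub0r mulmxN mul_mx_scalar raddfN /= mxtraceZ tr_rho2 mulr1.
congr (_%:E); rewrite -rmorphN /= lnV ?opprK // qualifE /= ltr0n //.
Qed.

Lemma idx1 (i1 : 'I_2) (i2 : 'I_1) : (mxtens_index (i1, i2) : 'I_2) = i1.
Proof. by apply: val_inj; rewrite /= ord1 /= muln1 addn0. Qed.

Lemma sig0_herm : sig0 ^t* = sig0.
Proof.
apply/matrixP => i j; rewrite !mxE eq_sym; case: (i == j); rewrite ?mulr1n ?mulr0n ?rmorph0 //; exact: h2_conj.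
Qed.

Lemma one1_density : density_mx (1%:M : 'M[C]_1).
Proof.
split; first by apply/matrixP => i j; rewrite !ord1 !mxE /= mulr1n rmorph1.
split; first by move=> u; rewrite mulmx1; exact: psd_uu.
by rewrite mxtrace1.
Qed.

Lemma sig0_density : density_mx sig0.
Proof.
split; first by rewrite sig0_herm.
split.
  move=> u; rewrite /sig0 mul_mx_scalar -scalemxAl mxE.
  apply: mulr_ge0; first by rewrite /h2 invr_ge0 ler0n.
  exact: psd_uu.
by rewrite mxtrace_scalar /h2 -[in RHS](@divff _ 2) ?pnatr_eq0 // mulr_natl.
Qed.

Lemma IQ_sig0 : @IQ_state R 2 1 sig0.
Proof.
exists 1%N, (fun _ => 1), (fun _ => sig0), (fun _ => 1%:M); split.
- by [].
- by rewrite big_ord1.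
- by move=> _; split; [exact: sig0_density | exact: scalar_mx_is_diag].
- by move=> _; exact: one1_density.
rewrite big_ord1 scale1r.
suff H : forall i j : 'I_(2*1), sig0 i j = (sig0 *t (1%:M : 'M[C]_1)) i j.
  by apply/matrixP; exact: H.
move=> k l; rewrite -[k]mxtens_unindexK -[l]mxtens_unindexK.
case: (mxtens_unindex k) => i1 i2; case: (mxtens_unindex l) => j1 j2.
by rewrite tensmxE !ord1 !mxE !idx1 eqxx mulr1n mulr1.
Qed.

Definition dv (ar br : R) : 'rV[C]_2 := \row_j ((if j == 0 then ar else br)%:C)%C.
Definition dg (ar br : R) : 'M[C]_2 := diag_mx (dv ar br).

Lemma dg_herm ar br : (dg ar br) ^t* = dg ar br.
Proof.
apply/matrixP => k l; rewrite !mxE.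
case: k => [[|[|//]]] ?; case: l => [[|[|//]]] ? /=; rewrite ?mulr1n ?mulr0n ?rmorph0 //.
all: apply: conj_Creal; apply/complex_realP; by eexists.
Qed.

Lemma dg_normal ar br : dg ar br \is normalmx.
Proof. by apply/normalmxP; rewrite dg_herm. Qed.

Lemma dg_eig ar br : (dg ar br - (ar%:C)%C%:M) *m (dg ar br - (br%:C)%C%:M) = 0.
Proof.
rewrite /dg -!diag_const_mx -!raddfB /= mulmx_diag.
apply/matrixP => k l; rewrite !mxE.
case: k => [[|[|//]]] ? /=.
  by rewrite subrr mul0r mul0rn.
by rewrite subrr mulr0 mul0rn.
Qed.

Lemma logm_dg ar br al be : ln ar = al + be * ar -> ln br = al + be * br ->
  logm (dg ar br) = (al%:C)%C%:M + (be%:C)%C *: dg ar br.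
Proof.
move=> ha hb; rewrite /logm (@mx_fun_lin _ _ _ (al%:C)%C (be%:C)%C) ?dg_normal //.
move=> k; have [] := @eig2 _ (dg ar br) _ _ (dg_normal ar br) (dg_eig ar br) k.
- by move=> ->; rewrite /= ha rmorphD rmorphM.
- by move=> ->; rewrite /= hb rmorphD rmorphM.
Qed.

Lemma tr_rho2_dg ar br : \tr (rho2 *m dg ar br) = h2 * ((ar + br)%:C)%C.
Proof.
rewrite /dg mul_mx_diag /mxtrace !big_ord_recr big_ord0 /= !mxE /= add0r.
by rewrite rmorphD mulrDr.
Qed.

Lemma val_dg ar br al be : ar + br = 1 -> ln ar = al + be * ar -> ln br = al + be * br ->
  complex.Re (\tr (rho2 *m (logm rho2 - logm (dg ar br)))) = - (al + be * 2^-1).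
Proof.
move=> hab ha hb; rewrite logm_rho2 (logm_dg ha hb) sub0r mulmxN mulmxDr mul_mx_scalar -scalemxAr.
rewrite raddfN /= mxtraceD !mxtraceZ tr_rho2 tr_rho2_dg hab mulr1 h2E.
by rewrite -!rmorphM -rmorphD -rmorphN /= mulr1.
Qed.

Lemma dg_ker_nz ar br k : (kermx (dg ar br) <= kermx rho2)%MS -> dv ar br 0 k != 0.
Proof.
move=> hk; apply/negP => /eqP hz.
have : ((delta_mx 0 k : 'rV[C]_2) <= kermx (dg ar br))%MS.
  apply/sub_kermxP; rewrite -rowE; apply/matrixP => a b.
  by rewrite mxE /dg mxE hz mul0rn mxE.
move/submx_trans/(_ hk)/sub_kermxP; rewrite -rowE => /matrixP/(_ 0 0).
by rewrite !mxE /h2 => /eqP; rewrite invr_eq0 pnatr_eq0.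
Qed.

Lemma lb_dg ar br : 0 <= ar -> 0 <= br -> ar + br = 1 ->
  ((ln (2:R))%:E <= rel_entropy rho2 (dg ar br))%E.
Proof.
move=> ha0 hb0 hab; rewrite /rel_entropy; case: ifP => hk; last by rewrite leey.
have ha : 0 < ar.
  rewrite lt_def ha0 andbT; apply/negP => /eqP e.
  by move: (dg_ker_nz 0 hk); rewrite mxE /= e rmorph0 eqxx.
have hb : 0 < br.
  rewrite lt_def hb0 andbT; apply/negP => /eqP e.
  by move: (dg_ker_nz 1 hk); rewrite mxE /= e rmorph0 eqxx.
pose be := if ar == br then 0 else (ln ar - ln br) / (ar - br).
pose al := ln ar - be * ar.
have e1 : ln ar = al + be * ar by rewrite subrK.
have e2 : ln br = al + be * br.
  rewrite /al /be; case: eqP => [->|neq]; first by rewrite mul0r subr0 addr0.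
  field; by rewrite subr_eq0; apply/eqP.
rewrite (val_dg hab e1 e2) lee_fin.
have hX : ln ar + ln br = 2 * al + be.
  by rewrite e1 e2 addrACA -mulrDr hab mulr1 mulr_natl mulr2n.
have hp : ar * br <= 2^-1 * 2^-1.
  have h1 : (ar + br)^+2 = 1 by rewrite hab expr1n.
  have h2 := sqr_ge0 (ar - br).
  nra.
have hl : ln (ar * br) <= ln (2^-1 * 2^-1).
  by rewrite ler_ln // posrE ?mulr_gt0 // invr_gt0 ltr0n.
move: hl; rewrite !lnM ?posrE ?invr_gt0 ?ltr0n // lnV ?posrE ?ltr0n // => hl.
lra.
Qed.

Lemma psd_diag n (A : 'M[C]_n) j : (forall u : 'rV[C]_n, 0 <= (u *m A *m u ^t*) 0 0) -> 0 <= A j j.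
Proof.
move=> h; have := h (delta_mx 0 j).
have -> : (delta_mx 0 j : 'rV[C]_n) ^t* = delta_mx j 0.
  by apply/matrixP => a b; rewrite !mxE rmorph_nat andbC.
by rewrite -rowE -colE !mxE.
Qed.

Lemma lb_IQ (sig : 'M[C]_(2*1)) : IQ_state sig -> ((ln (2:R))%:E <= rel_entropy rho2 sig)%E.
Proof.
case=> K [p [s [t [hp hsum hs ht ->]]]].
pose x (j : 'I_2) := \sum_k ((p k)%:C)%C * s k j j.
have hx : forall j, 0 <= x j.
  move=> j; apply: sumr_ge0 => k _; apply: mulr_ge0; first by rewrite ler0c.
  by case: (hs k) => [[_ [hpsd _]] _]; exact: psd_diag.
have hxR : forall j, ((complex.Re (x j))%:C)%C = x j.
  by move=> j; apply: RRe_real; apply: ger0_real.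
have htr : forall k, s k 0 0 + s k 1 1 = 1.
  move=> k; case: (hs k) => [[_ [_ ht1]] _]; move: ht1.
  rewrite /mxtrace !big_ord_recr big_ord0 /= add0r => <-; congr (_ + _); congr (s k _ _); exact: val_inj.
have ht1 : forall k, t k 0 0 = 1.
  by move=> k; case: (ht k) => [_ [_]]; rewrite /mxtrace big_ord1.
have hsum1 : x 0 + x 1 = 1.
  rewrite /x -big_split /=.
  under eq_bigr do rewrite -mulrDr htr mulr1.
  by rewrite -rmorph_sum hsum.
have hsig : (\sum_k ((p k)%:C)%C *: (s k *t t k) : 'M[C]_(2*1)) = dg (complex.Re (x 0)) (complex.Re (x 1)).
  suff H : forall k l : 'I_(2*1), (\sum_k ((p k)%:C)%C *: (s k *t t k) : 'M[C]_(2*1)) k l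
      = dg (complex.Re (x 0)) (complex.Re (x 1)) k l.
    by apply/matrixP; exact: H.
  move=> k l; rewrite -[k]mxtens_unindexK -[l]mxtens_unindexK.
  case: (mxtens_unindex k) => i1 i2; case: (mxtens_unindex l) => j1 j2.
  rewrite summxE.
  under eq_bigr do rewrite mxE.
  under eq_bigr do rewrite tensmxE.
  rewrite (ord1 i2) (ord1 j2).
  under eq_bigr do rewrite ht1 mulr1.
  rewrite /dg [RHS]mxE !idx1 [in RHS]mxE.
  case: (eqVneq i1 j1) => [<-|neq].
    rewrite mulr1n; case: i1 => [[|[|//]]] ? /=.
      by rewrite hxR /x; apply: eq_bigr => k0 _; congr (_ * _); congr (s k0 _ _); apply: val_inj.
    by rewrite hxR /x; apply: eq_bigr => k0 _; congr (_ * _); congr (s k0 _ _); apply: val_inj.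
  rewrite mulr0n big1 // => k0 _.
  case: (hs k0) => _ /is_diag_mxP ->; first by rewrite mulr0.
  by apply: contra neq => /eqP e; apply/eqP/val_inj.
rewrite hsig; apply: lb_dg.
- by move: (hx 0); rewrite -(hxR 0) ler0c.
- by move: (hx 1); rewrite -(hxR 1) ler0c.
- move: hsum1; case: (x 0) => a b; case: (x 1) => c d /= [] <- _ //.
Qed.

Lemma coh_rho2 : @coh_rel_ent R 2 1 rho2 = ((ln (2:R))%:E)%E.
Proof.
apply/eqP; rewrite eq_le; apply/andP; split.
  apply: ereal_inf_lbound; exists sig0; first exact: IQ_sig0.
  exact: rel_rho2_sig0.
apply: le_ereal_inf_tmp => y [sig hsig <-]; exact: lb_IQ.
Qed.
End S.

Theorem proposition2 (R : realType) :
  exists (dA dB dC : nat) (rho : 'M[R[i]]_(dA * (dB * dC))),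
    density_mx rho /\
    (coh_rel_ent rho < coh_rel_ent (ptrace_C rho) + coh_rel_ent (ptrace_B rho))%E.
Proof.
exists 2%N, 1%N, 1%N, (const_mx (@h2 R)); split.
  exact: rho2_density.
have e1 : ptrace_C (const_mx (@h2 R) : 'M_(2 * (1 * 1))) = rho2 R.
  by apply/matrixP => k l; rewrite !mxE big_ord1 mxE.
have e2 : ptrace_B (const_mx (@h2 R) : 'M_(2 * (1 * 1))) = rho2 R.
  by apply/matrixP => k l; rewrite !mxE big_ord1 mxE.
rewrite e1 e2 coh_rho2.
rewrite -EFinD lte_fin ltrDl ln_gt0 //.
by rewrite ltr1n.
Qed.
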